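(* Let $\mathbf{X}=(X_1,\dots,X_d)$ be a random vector such that each $X_i$ is a.s. nonnegative with $0<E(X_i)<\infty$, let $\|\mathbf{x}\|_F=E(\max(|x_0|,|x_1|X_1,\dots,|x_d|X_d))$, let $c_i=E(X_i)$ and $\|(x_0,\dots,x_d)\|_{\infty,\mathbf{c}}:=\max(|x_0|,|x_1|c_1,\dots,|x_d|c_d)$. Then $\|(1,1/c_1,\dots,1/c_d)\|_F=1$ if and only if $\|\cdot\|_F=\|\cdot\|_{\infty,\mathbf{c}}$. *)

(* Defs.v *)
From HB Require Import structures.
From mathcomp Require Import all_boot all_order all_algebra.
From mathcomp Require Import all_classical all_reals all_analysis.
Set Implicit Arguments. Unset Strict Implicit. Unset Printing Implicit Defensive.
Import Order.TTheory GRing.Theory Num.Theory.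
Local Open Scope ring_scope.

(* The norm ||(x_0, x_1, ..., x_d)||_F = E(max(|x_0|, |x_1| X_1, ..., |x_d| X_d)),
   with the (d+1)-vector split as x0 : R and x : 'I_d -> R (x_{i+1} = x i). *)
Definition normF d0 (T : measurableType d0) (R : realType) (P : probability T R)
  (n : nat) (X : 'I_n -> T -> R) (x0 : R) (x : 'I_n -> R) : \bar R :=
  'E_P[fun t => \big[Num.max/`|x0|]_(i < n) (`|x i| * X i t)].

(* c_i = E(X_i) (a real number, under the finiteness assumption). *)
Definition cmean d0 (T : measurableType d0) (R : realType) (P : probability T R)
  (n : nat) (X : 'I_n -> T -> R) (i : 'I_n) : R := fine 'E_P[X i].

Definition norm_inf_c (R : realType) (n : nat) (c : 'I_n -> R)
  (x0 : R) (x : 'I_n -> R) : R :=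
  \big[Num.max/`|x0|]_(i < n) (`|x i| * c i).

(* Main.v *)
Require Import Defs.
From HB Require Import structures.
From mathcomp Require Import all_boot all_order all_algebra.
From mathcomp Require Import all_classical all_reals all_analysis.
Import Order.TTheory GRing.Theory Num.Theory.
Local Open Scope ring_scope.

Lemma expE_aux d0 (T : measurableType d0) (R : realType) (P : probability T R)
  (f : T -> R) : ('E_P[f])%E = (\int[P]_t (f t)%:E)%E.
Proof. by rewrite unlock. Qed.

Lemma mbigmax d0 (T : measurableType d0) (R : realType) n (a : R)
  (f : 'I_n -> T -> R) : (forall i, measurable_fun setT (f i)) ->
  measurable_fun setT (fun t => \big[Num.max/a]_(i < n) f i t).
Proof.
elim: n f => [|n IH] f mf.
  rewrite (_ : (fun t => _) = cst a); first exact: measurable_cst.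
  by apply/funext => t; rewrite big_ord0.
rewrite (_ : (fun t => _) = (fun t => Num.max (f ord0 t) (\big[Num.max/a]_(i < n) f (lift ord0 i) t))).
  2: by apply/funext => t; rewrite big_ord_recl.
apply: measurable_realfun.measurable_maxr => //.
exact: (IH (fun i => f (lift ord0 i))).
Qed.

Lemma bigmax_leE (R : realType) n (a : R) (F : 'I_n -> R) (y : \bar R) :
  (a%:E <= y)%E -> (forall i, ((F i)%:E <= y)%E) ->
  ((\big[Num.max/a]_(i < n) F i)%:E <= y)%E.
Proof.
move=> ay Fy; elim/big_ind: _ => // u v hu hv.
by case: (leP u v).
Qed.

Theorem proposition2p18 (R : realType) (d0 : measure_display)
  (T : measurableType d0) (P : probability T R) (d : nat)
  (X : 'I_d -> {RV P >-> R})
  (hX0 : forall i, {ae P, forall t, 0 <= X i t})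
  (hXpos : forall i, (0 < 'E_P[X i])%E)
  (hXfin : forall i, ('E_P[X i] < +oo)%E) :
  normF P (fun i => X i) 1 (fun i => (cmean P (fun j => X j) i)^-1) = 1%:E <->
  (forall (x0 : R) (x : 'I_d -> R),
     normF P (fun i => X i) x0 x =
     (norm_inf_c (cmean P (fun j => X j)) x0 x)%:E).
Proof.
set c := cmean P (fun j => X j).
have cE i : ('E_P[X i] = (c i)%:E)%E.
  rewrite /c /cmean fineK // ge0_fin_numE ?hXfin //.
  exact: ltW (hXpos i).
have c0 i : 0 < c i by rewrite -lte_fin -cE.
have c0' i : 0 <= c i by apply: ltW.
have mX i : measurable_fun setT (X i) by [].
pose Xp i t := Num.max (X i t) 0.
have XpE i : (\int[P]_t (Xp i t)%:E)%E = (c i)%:E.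
  rewrite -cE expE_aux; apply: ae_eq_integral => //.
  - by apply/measurable_realfun.measurable_EFinP; apply: measurable_realfun.measurable_maxr => //; exact: measurable_cst.
  - by apply/measurable_realfun.measurable_EFinP.
  - move: (hX0 i); apply: filterS => t /= h _.
    by rewrite /Xp (max_idPl h).
have mN (x0 : R) (x : 'I_d -> R) : measurable_fun setT
    (fun t => \big[Num.max/`|x0|]_(i < d) (`|x i| * X i t)).
  by apply: mbigmax => i; apply: measurable_realfun.measurable_funM => //; exact: measurable_cst.
have N0 (x0 : R) (x : 'I_d -> R) t : 0 <= \big[Num.max/`|x0|]_(i < d) (`|x i| * X i t).
  exact: le_trans (normr_ge0 x0) (bigmax_ge_id _ _ _ _).
have lower x0 x : ((norm_inf_c c x0 x)%:E <= normF P (fun i => X i) x0 x)%E.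
  rewrite /normF expE_aux /norm_inf_c; apply: bigmax_leE.
  - rewrite -[X in (X <= _)%E]mule1 -(probability_setT P) -integral_cst //.
    apply: ge0_le_integral => //.
    + by move=> t _; rewrite lee_fin.
    + by apply/measurable_realfun.measurable_EFinP.
    + by move=> t _; rewrite lee_fin; exact: bigmax_ge_id.
  - move=> i; rewrite EFinM -XpE -ge0_integralZl_EFin //.
    + apply: ge0_le_integral => //.
      * by move=> t _; rewrite lee_fin mulr_ge0 // le_max lexx orbT.
      * apply/measurable_realfun.measurable_EFinP; apply: measurable_realfun.measurable_funM.
          exact: measurable_cst.
        by apply: measurable_realfun.measurable_maxr => //; exact: measurable_cst.
      * by apply/measurable_realfun.measurable_EFinP.
      * move=> t _; rewrite lee_fin /Xp.
        case: (leP 0 (X i t)) => h.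
        - exact: le_bigmax.
        - by rewrite mulr0.
    + by move=> t _; rewrite lee_fin le_max lexx orbT.
    + apply/measurable_realfun.measurable_EFinP.
      by apply: measurable_realfun.measurable_maxr => //; exact: measurable_cst.
have upper x0 x : (normF P (fun i => X i) x0 x <=
    (norm_inf_c c x0 x)%:E * normF P (fun i => X i) 1 (fun i => (c i)^-1)%R)%E.
  set K := norm_inf_c c x0 x.
  have K0 : 0 <= K by exact: le_trans (normr_ge0 x0) (bigmax_ge_id _ _ _ _).
  rewrite /normF !expE_aux -ge0_integralZl_EFin //.
  - apply: ge0_le_integral => //.
    + by move=> t _; rewrite lee_fin.
    + by apply/measurable_realfun.measurable_EFinP; exact: mN.
    + by apply: measurable_funeM; apply/measurable_realfun.measurable_EFinP; exact: mN.
    + move=> t _; rewrite -EFinM lee_fin.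
      have M1 : (1 <= \big[Num.max/`|1|]_(i < d) (`|(c i)^-1| * X i t))%R.
        by rewrite -{1}(normr1 R); exact: bigmax_ge_id.
      apply: bigmax_le.
      * apply: le_trans (ler_peMr K0 M1).
        exact: bigmax_ge_id.
      * move=> i _; case: (leP 0 (X i t)) => h.
        - have -> : (`|x i| * X i t = (`|x i| * c i) * (`|(c i)^-1| * X i t))%R.
            rewrite (@ger0_norm _ (c i)^-1) ?invr_ge0 ?c0' // mulrA mulfK //.
            exact: lt0r_neq0.
          apply: ler_pM.
          + by rewrite mulr_ge0.
          + by rewrite mulr_ge0.
          + exact: (le_bigmax _ (fun i => `|x i| * c i) i).
          + exact: (le_bigmax _ (fun i => `|(c i)^-1| * X i t) i).
        - apply: le_trans (_ : 0 <= _).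
            by rewrite mulr_ge0_le0 // ltW.
          exact: mulr_ge0 K0 (N0 _ _ t).
  - by move=> t _; rewrite lee_fin.
  - by apply/measurable_realfun.measurable_EFinP; exact: mN.
split.
- move=> H x0 x; apply: le_anti; apply/andP; split; last exact: lower.
  by rewrite -[X in (_ <= X)%E]mule1 -H; exact: upper.
- move=> H; rewrite H; congr EFin; rewrite /norm_inf_c; apply: le_anti.
  apply/andP; split.
  + apply: bigmax_le; first by rewrite normr1.
    move=> i _; rewrite ger0_norm ?invr_ge0 ?c0' // mulVf //.
    exact: lt0r_neq0.
  + by rewrite -{1}(normr1 R); exact: bigmax_ge_id.
Qed.
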